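(* Let $\mathcal H$ be a family of graphs. The following are equivalent: (i) there is a constant $c=c(\mathcal H)$ such that every (not necessarily connected) $\mathcal H$-free graph $G$ has fewer than $c$ vertices $v$ with $\alpha(G[N(v)])\ge 2$; (ii) there is a positive integer $n$ such that $\mathcal H\le \{K_n^*,\ nP_3,\ K_{1,n}^*,\ K_{2,n},\ E_2+K_n,\ CK_n\}$.
   Context: All graphs are finite, simple, undirected. For graphs $H_1,H_2$, write $H_1\prec H_2$ if $H_2$ contains an induced subgraph isomorphic to $H_1$. A graph $G$ is $\mathcal H$-free if no $H\in\mathcal H$ satisfies $H\prec G$. For families $\mathcal H_1,\mathcal H_2$, write $\mathcal H_1\le\mathcal H_2$ if for every $H_2\in\mathcal H_2$ there is $H_1\in\mathcal H_1$ with $H_1\prec H_2$. $N(v)$ is the neighborhood, $G[S]$ the induced subgraph, $\alpha$ the independence number. $K_n$, $E_n$, $P_n$ are the complete graph, edgeless graph, and path on $n$ vertices; $K_{s,t}$ is the complete bipartite graph; $nG$ is the disjoint union of $n$ copies of $G$; $G_1+G_2$ is the join. $K_{1,n}^*$ is obtained from the star $K_{1,n}$ by attaching a new pendant vertex to each leaf; $K_n^*$ is obtained from $K_n$ by attaching a new pendant vertex to each vertex; $CK_n$ is obtained from two disjoint copies of $K_n$ by adding a perfect matching between them. *)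

(* Defs.v *)
From mathcomp Require Import all_boot.
Set Implicit Arguments. Unset Strict Implicit. Unset Printing Implicit Defensive.

(* A finite simple undirected graph: a finite vertex type together with a
   relation [grel]; adjacency is the irreflexive symmetric closure, so every
   value of this type denotes a simple graph. *)
Record graph := Graph { V : finType; grel : rel V }.

Definition adj (G : graph) : rel (V G) :=
  fun x y => (x != y) && (grel x y || grel y x).

Definition induced (H1 H2 : graph) : Prop :=
  exists f : V H1 -> V H2, injective f /\
    forall x y, adj (f x) (f y) = adj x y.

Definition gfamily := graph -> Prop.

Definition Hfree (F : gfamily) (G : graph) : Prop :=
  forall H, F H -> ~ induced H G.

Definition fam_le (F1 F2 : gfamily) : Prop :=
  forall H2, F2 H2 -> exists2 H1, F1 H1 & induced H1 H2.

Definition nbhd (G : graph) (v : V G) : {set V G} := [set u | adj v u].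

Definition indep (G : graph) (A : {set V G}) : bool :=
  [forall x in A, forall y in A, ~~ adj x y].

Definition alpha_on (G : graph) (S : {set V G}) : nat :=
  \max_(A : {set V G} | (A \subset S) && indep A) #|A|.

(* K_n^* : inl i = clique vertex, inr i = its pendant. *)
Definition Kstar (n : nat) : graph :=
  @Graph ('I_n + 'I_n)%type (fun x y =>
    match x, y with
    | inl i, inl j => i != j
    | inl i, inr j => i == j
    | _, _ => false
    end).

(* n P_3 : copy a, position 0-1-2 *)
Definition nP3 (n : nat) : graph :=
  @Graph ('I_n * 'I_3)%type (fun x y =>
    (x.1 == y.1) && (y.2 == x.2.+1 :> nat)).

(* K_{1,n}^* : None = centre, inl i = leaf, inr i = pendant of leaf i. *)
Definition K1nstar (n : nat) : graph :=
  @Graph (option ('I_n + 'I_n))%type (fun x y =>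
    match x, y with
    | None, Some (inl _) => true
    | Some (inl i), Some (inr j) => i == j
    | _, _ => false
    end).

Definition K2n (n : nat) : graph :=
  @Graph ('I_2 + 'I_n)%type (fun x y =>
    match x, y with
    | inl _, inr _ => true
    | _, _ => false
    end).

Definition E2joinKn (n : nat) : graph :=
  @Graph ('I_2 + 'I_n)%type (fun x y =>
    match x, y with
    | inl _, inr _ => true
    | inr i, inr j => i != j
    | _, _ => false
    end).

(* CK_n : two copies of K_n plus a perfect matching between them. *)
Definition CK (n : nat) : graph :=
  @Graph (bool * 'I_n)%type (fun x y =>
    ((x.1 == y.1) && (x.2 != y.2)) || ((x.1 != y.1) && (x.2 == y.2))).

Definition six_family (n : nat) : gfamily :=
  fun H => H = Kstar n \/ H = nP3 n \/ H = K1nstar n \/ H = K2n n \/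
           H = E2joinKn n \/ H = CK n.

(* Main.v *)
Require Import Defs.
From mathcomp Require Import all_boot zify.
From Stdlib Require Classical_Prop.
Set Implicit Arguments. Unset Strict Implicit. Unset Printing Implicit Defensive.


Lemma sum_count_eq (C : finType) (T : Type) (g : T -> C) (s : seq T) :
  \sum_(c : C) count (fun y => g y == c) s = size s.
Proof.
elim: s => [|x s IH] /=; first by rewrite big1.
rewrite big_split /= IH (bigD1 (g x)) //= eqxx big1 ?addn0 ?add1n // => c.
by rewrite eq_sym => /negPf ->.
Qed.

Lemma pigeon (C : finType) (T : Type) (g : T -> C) (s : seq T) X :
  #|C| * X <= size s -> 0 < size s -> exists c, X <= count (fun y => g y == c) s.
Proof.
move=> Hs Hpos.
case: (boolP [exists c, X <= count (fun y => g y == c) s]) => [/existsP //| /existsPn Hn].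
have H : size s <= \sum_(c : C) X.-1.
  rewrite -(sum_count_eq g); apply: leq_sum => c _.
  move: (Hn c); rewrite -ltnNge => H1; rewrite -ltnS; exact: (leq_trans H1 (leqSpred _)).
rewrite sum_nat_const in H. have {}H : size s <= #|C| * X.-1 := H.
move: (leq_trans Hs H); clear Hn; case: X Hs H => [|X] /= Hs H H2; exfalso.
all: nia.
Qed.

Lemma greedy (C : finType) (col : nat -> nat -> C) m (s : seq nat) :
  sorted ltn s -> (#|C|.+2)^m <= size s ->
  exists u : seq (nat * C), [/\ subseq (map fst u) s, size u = m &
     pairwise (fun p q => col p.1 q.1 == p.2) u].
Proof.
elim: m s => [|m IH] s Hs Hsz; first by exists [::]; rewrite sub0seq.
case: s Hs Hsz => [|x s'] Hs Hsz; first by move: Hsz; rewrite leqn0 expn_eq0.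
have Hs' : sorted ltn s' by exact: (path_sorted Hs).
have Hp : #|C| * (#|C|.+2)^m <= size s'.
  move: Hsz; rewrite /= expnS; have := expn_gt0 (#|C|.+2) m; rewrite /= => HP H. nia.
have Hp0 : 0 < size s'.
  move: Hsz; rewrite /= expnS; have := expn_gt0 (#|C|.+2) m; rewrite /= => HP H. nia.
have [c Hc] := pigeon (col x) Hp Hp0.
have Hs'' : sorted ltn [seq y <- s' | col x y == c] by apply: sorted_filter => //; exact: ltn_trans.
have [|u [Hsub Hsize Hpw]] := IH _ Hs''; first by rewrite size_filter.
exists ((x, c) :: u); split => //=.
- rewrite eqxx; apply: subseq_trans Hsub _; exact: filter_subseq.
- by rewrite Hsize.
- rewrite Hpw andbT; apply/allP => q Hq /=.
  have : q.1 \in [seq y <- s' | col x y == c].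
    by apply: (mem_subseq Hsub); apply: map_f.
  by rewrite mem_filter => /andP [].
Qed.

Lemma ramsey (C : finType) (c0 : C) (col : nat -> nat -> C) N (s : seq nat) :
  sorted ltn s -> (#|C|.+2)^(#|C| * N) <= size s ->
  exists c w, [/\ subseq w s, N <= size w & pairwise (fun x y => col x y == c) w].
Proof.
move=> Hs Hsz.
have [u [Hsub Hsize Hpw]] := greedy col Hs Hsz.
have HC : 0 < #|C| by apply/card_gt0P; exists c0.
case: (posnP N) => [->|HN]; first by exists c0, [::]; rewrite sub0seq.
have [c Hc] : exists c, N <= count (fun p : nat * C => p.2 == c) u.
  apply: pigeon; rewrite Hsize //; by rewrite muln_gt0 HC.
exists c, (map fst [seq p <- u | p.2 == c]); split.
- apply: subseq_trans Hsub; apply: map_subseq; exact: filter_subseq.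
- by rewrite size_map size_filter.
- rewrite pairwise_map.
  have := pairwise_filter (fun p : nat * C => p.2 == c) Hpw.
  elim: [seq p <- u | p.2 == c] (filter_all (fun p : nat * C => p.2 == c) u) => //= p l IHl.
  move=> /andP [Hp Hl] /andP [Ha Hb]; apply/andP; split; last exact: IHl.
  apply/allP => q Hq /=; move/allP: Ha => /(_ q Hq) /eqP ->; exact: Hp.
Qed.


Definition rel3 (G : graph) (x y : V G) : nat :=
  if x == y then 0 else if adj x y then 1 else 2.
Definition inner (p q : nat) : nat :=
  if p == q then 0 else if (p == 1) || (q == 1) then 1 else 2.
Definition rl (c : nat -> nat -> nat) (k l : nat) (p q : nat) : nat :=
  if k < l then c p q else if k == l then inner p q else c q p.
Definition sx (s : nat) : nat := if s < 2 then s else s.+1.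
Definition sidx (n s : nat) : nat := if s < 2 then s else n + s.
Definition homog (G : graph) (T : nat -> nat -> V G) c N :=
  forall k l p q, k < N -> l < N -> p < 3 -> q < 3 -> rel3 (T k p) (T l q) = rl c k l p q.

Lemma adj_irr (G : graph) (x : V G) : adj x x = false.
Proof. by rewrite /adj eqxx. Qed.
Lemma adj_sym (G : graph) (x y : V G) : adj x y = adj y x.
Proof. by rewrite /adj eq_sym orbC. Qed.

Lemma induced_trans H1 H2 H3 : induced H1 H2 -> induced H2 H3 -> induced H1 H3.
Proof.
move=> [f [fi fa]] [g [gi ga]]; exists (g \o f); split; first exact: inj_comp.
by move=> x y /=; rewrite ga fa.
Qed.

Lemma embed_T (G : graph) (T : nat -> nat -> V G) c N (Hom : homog T c N)
  (H : graph) (idx : V H -> nat) (pos : V H -> nat) :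
  (forall x, idx x < N) -> (forall x, pos x < 3) ->
  (forall x y, (rl c (idx x) (idx y) (pos x) (pos y) == 1) = adj x y) ->
  (forall x y, rl c (idx x) (idx y) (pos x) (pos y) = 0 -> x = y) ->
  induced H G.
Proof.
move=> Hi Hp Ha He; exists (fun x => T (idx x) (pos x)); split.
- move=> x y Hxy; apply: He; rewrite -Hom // /rel3 Hxy eqxx //.
- move=> x y; rewrite -Ha -Hom // /rel3.
  case: (T (idx x) (pos x) =P T (idx y) (pos y)) => [->|_]; first by rewrite adj_irr.
  by case: adj.
Qed.

Lemma inner_sym p q : inner p q = inner q p.
Proof. by rewrite /inner eq_sym orbC. Qed.
Lemma inner_same p : inner p p = 0.
Proof. by rewrite /inner eqxx. Qed.
Lemma rl_sym c k l p q : rl c k l p q = rl c l k q p.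
Proof.
rewrite /rl; case: (ltngtP k l) => h //; exact: inner_sym.
Qed.
Lemma rl_ord c k l k' l' p q : (k < l) = (k' < l') -> (k == l) = (k' == l') ->
  rl c k l p q = rl c k' l' p q.
Proof. by rewrite /rl => -> ->. Qed.
Lemma rl_shift c k l m p q : rl c (k + m) (l + m) p q = rl c k l p q.
Proof. by rewrite /rl ltn_add2r eqn_add2r. Qed.
Lemma rl_fc c n s k p q : s < 4 -> k < n -> rl c (sidx n s) (k + 2) p q = rl c (sx s) 2 p q.
Proof.
move=> Hs Hk; apply: rl_ord; rewrite /sidx /sx;
case: s Hs => [|[|[|[|s]]]] //= _; apply/idP/idP; lia.
Qed.
Lemma rl_cf c n s k p q : s < 4 -> k < n -> rl c (k + 2) (sidx n s) p q = rl c 2 (sx s) p q.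
Proof. by move=> Hs Hk; rewrite rl_sym rl_fc // rl_sym. Qed.
Lemma rl_cc c n s t p q : s < 4 -> t < 4 -> rl c (sidx n s) (sidx n t) p q = rl c (sx s) (sx t) p q.
Proof.
move=> Hs Ht; apply: rl_ord; rewrite /sidx /sx;
case: s Hs => [|[|[|[|s]]]] //= _; case: t Ht => [|[|[|[|t]]]] //= _; apply/idP/idP; lia.
Qed.
Lemma sidx_lt n s : s < 4 -> sidx n s < n + 4.
Proof. rewrite /sidx; case: ifP; lia. Qed.

Lemma inl_eq (A B : eqType) (a a' : A) : (@inl A B a == inl a') = (a == a').
Proof. by []. Qed.
Lemma inr_eq (A B : eqType) (a a' : B) : (@inr A B a == inr a') = (a == a').
Proof. by []. Qed.
Lemma some_eq (A : eqType) (a a' : A) : (Some a == Some a') = (a == a').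
Proof. by []. Qed.
Lemma ord_ltF n (i j : 'I_n) : i < j -> (i == j) = false.
Proof. move=> h. by rewrite -val_eqE /= (ltn_eqF h). Qed.
Lemma ord_gtF n (i j : 'I_n) : i < j -> (j == i) = false.
Proof. by move=> h; rewrite eq_sym ord_ltF. Qed.

Ltac ordcase i j :=
  case: (ltngtP i j) => [||/val_inj ?];
  [ let h := fresh in move=> h; rewrite ?(ord_ltF h) ?(ord_gtF h)
  | let h := fresh in move=> h; rewrite ?(ord_ltF h) ?(ord_gtF h)
  | subst ].

Definition kstar_ok (c : nat -> nat -> nat) p q :=
  [&& c p p == 1, c q q == 2, inner p q == 1, c p q == 2 & c q p == 2].
Definition ck_ok (c : nat -> nat -> nat) p q :=
  [&& c p p == 1, c q q == 1, inner p q == 1, c p q == 2 & c q p == 2].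

Lemma kstar_sound (G : graph) (T : nat -> nat -> V G) c n (Hom : homog T c (n + 4)) p q :
  p < 3 -> q < 3 -> kstar_ok c p q -> induced (Kstar n) G.
Proof.
move=> Hp Hq /and5P [/eqP H1 /eqP H2 /eqP H3 /eqP H4 /eqP H5].
have Hqp : inner q p = 1 by rewrite inner_sym.
apply: (@embed_T G T c _ Hom (Kstar n) (fun x : 'I_n + 'I_n => match x with inl i => i + 2 | inr i => i + 2 end)
  (fun x : 'I_n + 'I_n => match x with inl _ => p | inr _ => q end)).
- by case=> i /=; have := ltn_ord i; lia.
- by case.
- case=> i [] j /=; rewrite rl_shift /adj /= /rl ?inl_eq ?inr_eq;
  ordcase i j; rewrite ?ltnn ?eqxx ?inner_same ?H1 ?H2 ?H3 ?H4 ?H5 ?Hqp //=.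
- case=> i [] j /=; rewrite rl_shift /rl;
  ordcase i j; rewrite ?ltnn ?eqxx ?inner_same ?H1 ?H2 ?H3 ?H4 ?H5 ?Hqp //=.
Qed.

Lemma ck_sound (G : graph) (T : nat -> nat -> V G) c n (Hom : homog T c (n + 4)) p q :
  p < 3 -> q < 3 -> ck_ok c p q -> induced (CK n) G.
Proof.
move=> Hp Hq /and5P [/eqP H1 /eqP H2 /eqP H3 /eqP H4 /eqP H5].
have Hqp : inner q p = 1 by rewrite inner_sym.
apply: (@embed_T G T c _ Hom (CK n) (fun x : bool * 'I_n => x.2 + 2)
  (fun x : bool * 'I_n => if x.1 then q else p)).
- by case=> b i /=; have := ltn_ord i; lia.
- by case=> [[]].
- case=> b i [] b' j /=; rewrite rl_shift /adj /= /rl ?xpair_eqE;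
  ordcase i j; case: b; case: b'; rewrite ?ltnn ?eqxx ?inner_same ?H1 ?H2 ?H3 ?H4 ?H5 ?Hqp //=.
- case=> b i [] b' j /=; rewrite rl_shift /rl;
  ordcase i j; case: b; case: b'; rewrite ?ltnn ?eqxx ?inner_same ?H1 ?H2 ?H3 ?H4 ?H5 ?Hqp //=.
Qed.

Definition k1n_ok (c : nat -> nat -> nat) s p0 p q :=
  [&& rl c (sx s) 2 p0 p == 1, rl c (sx s) 2 p0 q == 2, c p p == 2, c q q == 2,
      inner p q == 1, c p q == 2 & c q p == 2].
Definition k2n_ok (c : nat -> nat -> nat) s p0 t p1 q b :=
  [&& rl c (sx s) (sx t) p0 p1 == 2, rl c (sx s) 2 p0 q == 1, rl c (sx t) 2 p1 q == 1 & c q q == b].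
Definition np3_ok (c : nat -> nat -> nat) := all (fun p => all (fun q => c p q == 2) (iota 0 3)) (iota 0 3).

Lemma k1n_sound (G : graph) (T : nat -> nat -> V G) c n (Hom : homog T c (n + 4)) s p0 p q :
  s < 4 -> p0 < 3 -> p < 3 -> q < 3 -> k1n_ok c s p0 p q -> induced (K1nstar n) G.
Proof.
move=> Hs Hp0 Hp Hq /and5P [/eqP H1 /eqP H2 /eqP H3 /eqP H4 /and3P [/eqP H5 /eqP H6 /eqP H7]].
have Hqp : inner q p = 1 by rewrite inner_sym.
have G1 k : k < n -> rl c (sidx n s) (k + 2) p0 p = 1 by move=> Hk; rewrite rl_fc.
have G2 k : k < n -> rl c (sidx n s) (k + 2) p0 q = 2 by move=> Hk; rewrite rl_fc.
have G3 k : k < n -> rl c (k + 2) (sidx n s) p p0 = 1 by move=> Hk; rewrite rl_sym rl_fc.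
have G4 k : k < n -> rl c (k + 2) (sidx n s) q p0 = 2 by move=> Hk; rewrite rl_sym rl_fc.
apply: (@embed_T G T c _ Hom (K1nstar n)
  (fun x : option ('I_n + 'I_n) => match x with None => sidx n s | Some (inl i) => i + 2 | Some (inr i) => i + 2 end)
  (fun x : option ('I_n + 'I_n) => match x with None => p0 | Some (inl _) => p | Some (inr _) => q end)).
- by case=> [[] i|] /=; [have := ltn_ord i; lia|have := ltn_ord i; lia|exact: sidx_lt].
- by case=> [[]|].
- case=> [[] i|] [[] j|] /=; rewrite /adj /= ?some_eq ?inl_eq ?inr_eq ?rl_shift ?inner_same;
  rewrite ?G1 ?G2 ?G3 ?G4 //; rewrite /rl ?ltnn ?eqxx ?inner_same //;
  ordcase i j; rewrite ?ltnn ?eqxx ?inner_same ?H3 ?H4 ?H5 ?H6 ?H7 ?Hqp //=.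
- case=> [[] i|] [[] j|] /=; rewrite ?rl_shift ?G1 ?G2 ?G3 ?G4 //; rewrite /rl ?ltnn ?eqxx ?inner_same //;
  ordcase i j; rewrite ?ltnn ?eqxx ?inner_same ?H3 ?H4 ?H5 ?H6 ?H7 ?Hqp //=.
Qed.

Lemma k2n_sound (G : graph) (T : nat -> nat -> V G) c n (Hom : homog T c (n + 4)) s p0 t p1 q :
  s < 4 -> p0 < 3 -> t < 4 -> p1 < 3 -> q < 3 -> k2n_ok c s p0 t p1 q 2 -> induced (K2n n) G.
Proof.
move=> Hs Hp0 Ht Hp1 Hq /and4P [/eqP H1 /eqP H2 /eqP H3 /eqP H4].
have G1 k : k < n -> rl c (sidx n s) (k + 2) p0 q = 1 by move=> Hk; rewrite rl_fc.
have G2 k : k < n -> rl c (sidx n t) (k + 2) p1 q = 1 by move=> Hk; rewrite rl_fc.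
have G3 k : k < n -> rl c (k + 2) (sidx n s) q p0 = 1 by move=> Hk; rewrite rl_sym rl_fc.
have G4 k : k < n -> rl c (k + 2) (sidx n t) q p1 = 1 by move=> Hk; rewrite rl_sym rl_fc.
have G5 : rl c (sidx n s) (sidx n t) p0 p1 = 2 by rewrite rl_cc.
have G6 : rl c (sidx n t) (sidx n s) p1 p0 = 2 by rewrite rl_sym rl_cc.
have G7 u pp : rl c (sidx n u) (sidx n u) pp pp = 0 by rewrite /rl ltnn eqxx inner_same.
apply: (@embed_T G T c _ Hom (K2n n)
  (fun x : 'I_2 + 'I_n => match x with inl i => sidx n (if val i == 0 then s else t) | inr i => i + 2 end)
  (fun x : 'I_2 + 'I_n => match x with inl i => if val i == 0 then p0 else p1 | inr _ => q end)).
- by case=> i /=; [case: ifP => _; exact: sidx_lt|have := ltn_ord i; lia].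
- by case=> [i|i] //=; case: ifP.
- case=> [[[|[|//]] Hi]|i] [[[|[|//]] Hj]|j] /=; rewrite /adj /= ?inl_eq ?inr_eq ?rl_shift;
  rewrite ?G1 ?G2 ?G3 ?G4 ?G5 ?G6 ?G7 //; rewrite /rl ?ltnn ?eqxx ?inner_same //;
  ordcase i j; rewrite ?ltnn ?eqxx ?inner_same ?H4 //=.
- case=> [[[|[|//]] Hi]|i] [[[|[|//]] Hj]|j] /=; rewrite ?rl_shift;
  rewrite ?G1 ?G2 ?G3 ?G4 ?G5 ?G6 ?G7 //; try by move=> _; apply: congr1; apply: val_inj.
  rewrite /rl; ordcase i j; rewrite ?ltnn ?eqxx ?inner_same ?H4 //=.
Qed.

Lemma e2kn_sound (G : graph) (T : nat -> nat -> V G) c n (Hom : homog T c (n + 4)) s p0 t p1 q :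
  s < 4 -> p0 < 3 -> t < 4 -> p1 < 3 -> q < 3 -> k2n_ok c s p0 t p1 q 1 -> induced (E2joinKn n) G.
Proof.
move=> Hs Hp0 Ht Hp1 Hq /and4P [/eqP H1 /eqP H2 /eqP H3 /eqP H4].
have G1 k : k < n -> rl c (sidx n s) (k + 2) p0 q = 1 by move=> Hk; rewrite rl_fc.
have G2 k : k < n -> rl c (sidx n t) (k + 2) p1 q = 1 by move=> Hk; rewrite rl_fc.
have G3 k : k < n -> rl c (k + 2) (sidx n s) q p0 = 1 by move=> Hk; rewrite rl_sym rl_fc.
have G4 k : k < n -> rl c (k + 2) (sidx n t) q p1 = 1 by move=> Hk; rewrite rl_sym rl_fc.
have G5 : rl c (sidx n s) (sidx n t) p0 p1 = 2 by rewrite rl_cc.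
have G6 : rl c (sidx n t) (sidx n s) p1 p0 = 2 by rewrite rl_sym rl_cc.
have G7 u pp : rl c (sidx n u) (sidx n u) pp pp = 0 by rewrite /rl ltnn eqxx inner_same.
apply: (@embed_T G T c _ Hom (E2joinKn n)
  (fun x : 'I_2 + 'I_n => match x with inl i => sidx n (if val i == 0 then s else t) | inr i => i + 2 end)
  (fun x : 'I_2 + 'I_n => match x with inl i => if val i == 0 then p0 else p1 | inr _ => q end)).
- by case=> i /=; [case: ifP => _; exact: sidx_lt|have := ltn_ord i; lia].
- by case=> [i|i] //=; case: ifP.
- case=> [[[|[|//]] Hi]|i] [[[|[|//]] Hj]|j] /=; rewrite /adj /= ?inl_eq ?inr_eq ?rl_shift;
  rewrite ?G1 ?G2 ?G3 ?G4 ?G5 ?G6 ?G7 //; rewrite /rl ?ltnn ?eqxx ?inner_same //;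
  ordcase i j; rewrite ?ltnn ?eqxx ?inner_same ?H4 //=.
- case=> [[[|[|//]] Hi]|i] [[[|[|//]] Hj]|j] /=; rewrite ?rl_shift;
  rewrite ?G1 ?G2 ?G3 ?G4 ?G5 ?G6 ?G7 //; try by move=> _; apply: congr1; apply: val_inj.
  rewrite /rl; ordcase i j; rewrite ?ltnn ?eqxx ?inner_same ?H4 //=.
Qed.

Lemma np3_sound (G : graph) (T : nat -> nat -> V G) c n (Hom : homog T c (n + 4)) :
  np3_ok c -> induced (nP3 n) G.
Proof.
move=> Hn.
have H2 p q : p < 3 -> q < 3 -> c p q = 2.
  move=> Hp Hq; have := allP Hn p; rewrite mem_iota add0n => /(_ Hp) /allP /(_ q).
  by rewrite mem_iota add0n => /(_ Hq) /eqP.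
apply: (@embed_T G T c _ Hom (nP3 n) (fun x : 'I_n * 'I_3 => x.1 + 2) (fun x : 'I_n * 'I_3 => val x.2)).
- by case=> i r /=; have := ltn_ord i; lia.
- by case=> i r /=.
- case=> i r [] j r' /=; rewrite rl_shift /adj /= ?xpair_eqE /rl;
  ordcase i j; rewrite ?ltnn ?eqxx ?H2 ?andbF //=.
  case: r => [[|[|[|//]]] Hr]; case: r' => [[|[|[|//]]] Hr'] //.
- case=> i r [] j r' /=; rewrite rl_shift /rl;
  ordcase i j; rewrite ?ltnn ?eqxx ?H2 //=.
  by case: r => [[|[|[|//]]] Hr]; case: r' => [[|[|[|//]]] Hr'] // _; congr pair; apply: val_inj.
Qed.




Definition badset (G : graph) := [set v : V G | 2 <= alpha_on (nbhd v)].

Lemma bad_of (G : graph) (v x y : V G) :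
  x != y -> adj v x -> adj v y -> ~~ adj x y -> v \in badset G.
Proof.
move=> Hxy Hx Hy Hn; rewrite inE /alpha_on.
have <- : #|[set x; y]| = 2 by rewrite cards2 Hxy.
apply: (leq_bigmax_cond [set x; y]); apply/andP; split.
- by apply/subsetP => z; rewrite !inE => /orP [] /eqP ->.
- apply/forallP => a; apply/implyP; rewrite !inE => Ha; apply/forallP => b; apply/implyP; rewrite !inE => Hb.
  case/orP: Ha => /eqP ->; case/orP: Hb => /eqP ->; rewrite ?adj_irr //.
  by rewrite adj_sym.
Qed.

Lemma count_bad (G : graph) n (f : 'I_n -> V G) :
  injective f -> (forall i, f i \in badset G) -> n <= #|badset G|.
Proof.
move=> fi fb; have <- : #|[set f i | i : 'I_n]| = n by rewrite card_imset // card_ord.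
apply: subset_leq_card; apply/subsetP => z /imsetP [i _ ->]; exact: fb.
Qed.

Definition oth c (i : 'I_c.+2) : 'I_c.+2 := if i == ord0 then ord_max else ord0.
Lemma oth_neq c (i : 'I_c.+2) : (i == oth i) = false.
Proof. by rewrite /oth; case: (i =P ord0) => [->|/eqP /negPf h]; [rewrite -val_eqE|rewrite h]. Qed.

Lemma six_bad c H : six_family c.+2 H -> c.+2 <= #|badset H|.
Proof.
have ne := oth_neq.
case=> [->|[->|[->|[->|[->|->]]]]].
- apply: (@count_bad (Kstar c.+2) _ inl); first by move=> i j [].
  move=> i; apply: (@bad_of (Kstar c.+2) _ (inr i) (inl (oth i))) => //; rewrite /adj /= ?eqxx //.
  + by rewrite inl_eq ne.
  + by rewrite eq_sym ne.
- apply: (@count_bad (nP3 c.+2) _ (fun i => (i, @Ordinal 3 1 isT))); first by move=> i j [].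
  move=> i; apply: (@bad_of (nP3 c.+2) _ (i, @Ordinal 3 0 isT) (i, @Ordinal 3 2 isT)) => //; rewrite /adj /= ?xpair_eqE ?eqxx //.
- apply: (@count_bad (K1nstar c.+2) _ (fun i : 'I_c.+2 => Some (@inl _ 'I_c.+2 i))); first by move=> i j [].
  move=> i; apply: (@bad_of (K1nstar c.+2) _ None (Some (inr i))) => //; rewrite /adj /= ?eqxx //.
- apply: (@count_bad (K2n c.+2) _ (@inr 'I_2 'I_c.+2)); first by move=> i j [].
  move=> i; apply: (@bad_of (K2n c.+2) _ (inl (@Ordinal 2 0 isT)) (inl (@Ordinal 2 1 isT))) => //.
- apply: (@count_bad (E2joinKn c.+2) _ (@inr 'I_2 'I_c.+2)); first by move=> i j [].
  move=> i; apply: (@bad_of (E2joinKn c.+2) _ (inl (@Ordinal 2 0 isT)) (inl (@Ordinal 2 1 isT))) => //.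
- apply: (@count_bad (CK c.+2) _ (fun i => (false, i))); first by move=> i j [].
  move=> i; apply: (@bad_of (CK c.+2) _ (true, i) (false, oth i)) => //; rewrite /adj /= ?eqxx ?ne //=.
  by rewrite !xpair_eqE /= ne.
  by rewrite eq_sym ne.
Qed.
Definition I3 := iota 0 3.
Definition I4 := iota 0 4.
Definition coveredb c :=
  [|| has (fun p => has (fun q => kstar_ok c p q || ck_ok c p q) I3) I3,
      has (fun s => has (fun p0 => has (fun p => has (fun q => k1n_ok c s p0 p q) I3) I3) I3) I4,
      has (fun s => has (fun p0 => has (fun t => has (fun p1 => has (fun q =>
          k2n_ok c s p0 t p1 q 2 || k2n_ok c s p0 t p1 q 1) I3) I3) I4) I3) I4
    | np3_ok c].

Definition validb (c : nat -> nat -> nat) :=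
  [&& c 1 1 != 0,
      all (fun p => all (fun q => (c p q == 0) ==> (c p p == 0) && (c q q == 0)) I3) I3 &
      all (fun p => (c p p == 0) ==> all (fun y => (c p y == inner p y) && (c y p == inner y p)) I3) I3].

Definition lk (tb : seq (seq nat)) (p q : nat) : nat := nth 0 (nth [::] tb p) q.

Definition mktb (a b c d e f g h i : nat) : seq (seq nat) := [:: [:: a; b; c]; [:: d; e; f]; [:: g; h; i]].

Lemma all_cov : all (fun a => all (fun b => all (fun c => all (fun d => all (fun e =>
  all (fun f => all (fun g => all (fun h => all (fun i =>
   if validb (lk (mktb a b c d e f g h i)) then coveredb (lk (mktb a b c d e f g h i)) else true)
  I3) I3) I3) I3) I3) I3) I3) I3) I3.
Proof. by vm_compute. Qed.

Lemma mem_I3 p : (p \in I3) = (p < 3).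
Proof. by rewrite /I3 mem_iota. Qed.
Lemma mem_I4 p : (p \in I4) = (p < 4).
Proof. by rewrite /I4 mem_iota. Qed.

Lemma cover_sound (G : graph) (T : nat -> nat -> V G) c n (Hom : homog T c (n + 4)) :
  coveredb c -> exists H, six_family n H /\ induced H G.
Proof.
case/or4P.
- move=> /hasP [p]; rewrite mem_I3 => Hp /hasP [q]; rewrite mem_I3 => Hq /orP [] H.
  + by exists (Kstar n); split; [rewrite /six_family; left|exact: (kstar_sound Hom Hp Hq H)].
  + exists (CK n); split; [rewrite /six_family; by do 5 right|exact: (ck_sound Hom Hp Hq H)].
- move=> /hasP [s]; rewrite mem_I4 => Hs /hasP [p0]; rewrite mem_I3 => Hp0.
  move=> /hasP [p]; rewrite mem_I3 => Hp /hasP [q]; rewrite mem_I3 => Hq H.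
  by exists (K1nstar n); split; [rewrite /six_family; do 2 right; left|exact: (k1n_sound Hom Hs Hp0 Hp Hq H)].
- move=> /hasP [s]; rewrite mem_I4 => Hs /hasP [p0]; rewrite mem_I3 => Hp0.
  move=> /hasP [t]; rewrite mem_I4 => Ht /hasP [p1]; rewrite mem_I3 => Hp1.
  move=> /hasP [q]; rewrite mem_I3 => Hq /orP [] H.
  + by exists (K2n n); split; [rewrite /six_family; do 3 right; left|exact: (k2n_sound Hom Hs Hp0 Ht Hp1 Hq H)].
  + by exists (E2joinKn n); split; [rewrite /six_family; do 4 right; left|exact: (e2kn_sound Hom Hs Hp0 Ht Hp1 Hq H)].
- by move=> H; exists (nP3 n); split; [rewrite /six_family; right; left|exact: (np3_sound Hom H)].
Qed.

Lemma rel3_0 (G : graph) (x y : V G) : (rel3 x y == 0) = (x == y).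
Proof. by rewrite /rel3; case: (x =P y) => //; case: adj. Qed.
Lemma rel3_sym (G : graph) (x y : V G) : rel3 x y = rel3 y x.
Proof. by rewrite /rel3 eq_sym adj_sym. Qed.

Lemma homog_valid (G : graph) (T : nat -> nat -> V G) c N (Hom : homog T c N) :
  2 < N -> T 0 1 != T 1 1 -> validb c.
Proof.
move=> HN Hd.
have E k l p q : k < l < N -> p < 3 -> q < 3 -> rel3 (T k p) (T l q) = c p q.
  move=> /andP [Hkl HlN] Hp Hq; rewrite Hom //; [by rewrite /rl Hkl|exact: ltn_trans Hkl HlN].
have EE k l p q : k < l < N -> p < 3 -> q < 3 -> c p q = 0 -> T k p = T l q.
  by move=> Hkl Hp Hq H0; apply/eqP; rewrite -rel3_0 E // H0.
have N1 : 1 < N by apply: ltn_trans HN.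
have A01 : 0 < 1 < N by rewrite N1.
have A02 : 0 < 2 < N by rewrite HN.
have A12 : 1 < 2 < N by rewrite HN.
have N0 : 0 < N by apply: ltn_trans N1.
apply/and3P; split.
- by rewrite -(E 0 1 1 1 A01) // rel3_0.
- apply/allP => p; rewrite mem_I3 => Hp; apply/allP => q; rewrite mem_I3 => Hq; apply/implyP => /eqP H0.
  apply/andP; split; apply/eqP.
  + by rewrite -(E 0 1 p p A01 Hp Hp) (EE 0 2 p q A02 Hp Hq H0) (EE 1 2 p q A12 Hp Hq H0) /rel3 eqxx.
  + by rewrite -(E 1 2 q q A12 Hq Hq) -(EE 0 1 p q A01 Hp Hq H0) -(EE 0 2 p q A02 Hp Hq H0) /rel3 eqxx.
- apply/allP => p; rewrite mem_I3 => Hp; apply/implyP => /eqP H0.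
  have e1 := EE 0 1 p p A01 Hp Hp H0.
  apply/allP => y; rewrite mem_I3 => Hy; apply/andP; split; apply/eqP.
  + by rewrite -(E 0 1 p y A01 Hp Hy) e1 Hom // /rl ltnn eqxx.
  + by rewrite -(E 0 1 y p A01 Hy Hp) -e1 Hom // /rl ltnn eqxx.
Qed.

Lemma lk_agree (c : nat -> nat -> nat) p q : p < 3 -> q < 3 ->
  lk (mktb (c 0 0) (c 0 1) (c 0 2) (c 1 0) (c 1 1) (c 1 2) (c 2 0) (c 2 1) (c 2 2)) p q = c p q.
Proof. by case: p => [|[|[|]]] //; case: q => [|[|[|]]]. Qed.

Lemma homog_ext (G : graph) (T : nat -> nat -> V G) c c' N :
  (forall p q, p < 3 -> q < 3 -> c p q = c' p q) -> homog T c N -> homog T c' N.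
Proof.
move=> Hc Hom k l p q Hk Hl Hp Hq; rewrite Hom // /rl.
by case: ifP => _; [rewrite Hc|case: ifP => _ //; rewrite Hc].
Qed.

Lemma cover_of (c : nat -> nat -> nat) : (forall p q, p < 3 -> q < 3 -> c p q < 3) ->
  validb (lk (mktb (c 0 0) (c 0 1) (c 0 2) (c 1 0) (c 1 1) (c 1 2) (c 2 0) (c 2 1) (c 2 2))) ->
  coveredb (lk (mktb (c 0 0) (c 0 1) (c 0 2) (c 1 0) (c 1 1) (c 1 2) (c 2 0) (c 2 1) (c 2 2))).
Proof.
move=> Hc Hv; have A := all_cov.
have m p q : p < 3 -> q < 3 -> c p q \in I3 by move=> *; rewrite mem_I3 Hc.
move/allP: A => /(_ _ (m 0 0 isT isT)) /allP /(_ _ (m 0 1 isT isT)) /allP /(_ _ (m 0 2 isT isT)).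
move=> /allP /(_ _ (m 1 0 isT isT)) /allP /(_ _ (m 1 1 isT isT)) /allP /(_ _ (m 1 2 isT isT)).
move=> /allP /(_ _ (m 2 0 isT isT)) /allP /(_ _ (m 2 1 isT isT)) /allP /(_ _ (m 2 2 isT isT)).
by rewrite Hv.
Qed.

Definition wprop (G : graph) (v : V G) (xy : V G * V G) :=
  [&& xy.1 != xy.2, adj v xy.1, adj v xy.2 & ~~ adj xy.1 xy.2].
Definition pr (G : graph) (v : V G) := [pick xy | wprop v xy].
Definition tr (G : graph) (v : V G) (p : nat) : V G :=
  match pr v with Some xy => if p == 0 then xy.1 else if p == 1 then v else xy.2 | None => v end.

Lemma pr_some (G : graph) (v : V G) : v \in badset G -> exists xy, pr v = Some xy /\ wprop v xy.
Proof.
rewrite /pr; case: pickP => [xy H|H0 Hv]; first by exists xy.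
exfalso; move: Hv; rewrite inE /alpha_on; apply/negP; rewrite -ltnNge ltnS.
apply/bigmax_leqP => A /andP [HA Hi]; rewrite leqNgt; apply/negP => /card_gt1P [x [y [Hx Hy Hxy]]].
move: (H0 (x, y)); rewrite /wprop /= Hxy.
have := subsetP HA x Hx; rewrite /nbhd inE => ->.
have := subsetP HA y Hy; rewrite /nbhd inE => ->.
by move/forallP: Hi => /(_ x) /implyP /(_ Hx) /forallP /(_ y) /implyP /(_ Hy) ->.
Qed.

Lemma tr1 (G : graph) (v : V G) : tr v 1 = v.
Proof. by rewrite /tr; case: pr. Qed.

Lemma rel3_adj (G : graph) (x y : V G) : adj x y -> rel3 x y = 1.
Proof.
move=> H; rewrite /rel3 H; case: (x =P y) => // E; by rewrite E adj_irr in H.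
Qed.

Lemma tr_inner (G : graph) (v : V G) p q : v \in badset G -> p < 3 -> q < 3 ->
  rel3 (tr v p) (tr v q) = inner p q.
Proof.
move=> /pr_some [[x y] [Hpr /and4P [/= Hxy Hx Hy Hn]]] Hp Hq.
rewrite /tr Hpr /=.
have R1 : rel3 x v = 1 by rewrite rel3_adj // adj_sym.
have R2 : rel3 v x = 1 by rewrite rel3_adj.
have R3 : rel3 y v = 1 by rewrite rel3_adj // adj_sym.
have R4 : rel3 v y = 1 by rewrite rel3_adj.
have R5 : rel3 x y = 2 by rewrite /rel3 (negPf Hxy) (negPf Hn).
have R6 : rel3 y x = 2 by rewrite rel3_sym.
have R0 z : rel3 z z = 0 by rewrite /rel3 eqxx.
by case: p Hp => [|[|[|]]] //; case: q Hq => [|[|[|]]].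
Qed.

Definition bound n := (#|{ffun 'I_3 * 'I_3 -> 'I_3}|.+2) ^ (#|{ffun 'I_3 * 'I_3 -> 'I_3}| * (n + 4)).

Lemma main_dir (F : gfamily) n : fam_le F (six_family n) ->
  forall G : graph, Hfree F G -> #|badset G| < bound n.
Proof.
move=> Hle G HF; rewrite ltnNge; apply/negP => Hbig.
have Hpos : 0 < #|badset G| by apply: leq_trans Hbig; rewrite expn_gt0.
have [x0 _] : exists x0 : V G, x0 \in badset G by apply/card_gt0P.
set e := enum (badset G).
have He : size e = #|badset G| by rewrite /e -cardE.
pose tri i p := tr (nth x0 e i) p.
pose col i j : {ffun 'I_3 * 'I_3 -> 'I_3} := [ffun pq : 'I_3 * 'I_3 => inord (rel3 (tri i pq.1) (tri j pq.2))].
have Hb : bound n <= size (iota 0 (size e)) by rewrite size_iota He.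
have [cf [w [Hsub Hsz Hpw]]] := ramsey [ffun _ => ord0] col (iota_ltn_sorted 0 (size e)) Hb.
have Hsw : sorted ltn w by apply: subseq_sorted Hsub (iota_ltn_sorted 0 _); exact: ltn_trans.
have Hwe k : k < size w -> nth 0 w k < size e.
  move=> Hk; have := mem_subseq Hsub (mem_nth 0 Hk); by rewrite mem_iota.
have Hwlt k l : k < l -> l < size w -> nth 0 w k < nth 0 w l.
  move=> Hkl Hl; move: Hsw; rewrite (sorted_pairwise ltn_trans) => /(pairwiseP 0) H.
  by apply: H => //; rewrite inE ?(ltn_trans Hkl).
have Hcol k l : k < l -> l < size w -> col (nth 0 w k) (nth 0 w l) = cf.
  move=> Hkl Hl; move/(pairwiseP 0): Hpw => H; apply/eqP; apply: H; rewrite ?inE //; exact: ltn_trans Hkl Hl.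
have R3 (x y : V G) : rel3 x y < 3 by rewrite /rel3; case: eqP => //; case: adj.
pose T k p := tri (nth 0 w k) p.
pose c p q := nat_of_ord (cf (inord p, inord q)).
have Clt : forall k l p q, k < l -> l < size w -> p < 3 -> q < 3 -> rel3 (T k p) (T l q) = c p q.
  move=> k l p q Hkl Hl Hp Hq; rewrite /c -(Hcol k l) // ffunE /= !inordK //.
have Hom : homog T c (n + 4).
  move=> k l p q Hk Hl Hp Hq.
  have Hk' : k < size w by apply: leq_trans Hsz.
  have Hl' : l < size w by apply: leq_trans Hsz.
  rewrite /rl; case: (ltngtP k l) => Hkl.
  - exact: Clt.
  - by rewrite rel3_sym Clt.
  - subst l; rewrite /T /tri tr_inner //.
    by rewrite -mem_enum -/e mem_nth // Hwe.
pose c' := lk (mktb (c 0 0) (c 0 1) (c 0 2) (c 1 0) (c 1 1) (c 1 2) (c 2 0) (c 2 1) (c 2 2)).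
have Hom' : homog T c' (n + 4).
  by apply: (homog_ext _ Hom) => p q Hp Hq; rewrite /c' lk_agree.
have N4 : 4 <= size w by apply: leq_trans Hsz; rewrite leq_addl.
have Hv : validb c'.
  apply: (homog_valid Hom'); first lia; rewrite /T /tri /= !tr1 nth_uniq ?enum_uniq ?Hwe //;
    try by apply: leq_trans N4.
  by rewrite neq_ltn Hwlt // (leq_trans _ N4).
have Hcov : coveredb c' by apply: cover_of => // p q _ _; exact: ltn_ord.
have [H [Hsix Hind]] := cover_sound Hom' Hcov.
have [H1 HF1 Hi1] := Hle H Hsix.
exact: (HF H1 HF1 (induced_trans Hi1 Hind)).
Qed.

Theorem corollary1p9 (F : gfamily) :
  (exists c : nat, forall G : graph, Hfree F G ->
      #|[set v : V G | 2 <= alpha_on (nbhd v)]| < c)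
  <->
  (exists n : nat, 0 < n /\ fam_le F (six_family n)).
Proof.
split.
- move=> [c Hc]; exists c.+2; split => // H2 Hsix.
  case: (Classical_Prop.classic (exists2 H1, F H1 & induced H1 H2)) => // Hno.
  exfalso.
  have HF : Hfree F H2 by move=> H FH Hi; apply: Hno; exists H.
  have A := six_bad Hsix.
  have B : #|badset H2| < c := Hc H2 HF.
  lia.
- move=> [n [Hn Hle]]; exists (bound n) => G HF; exact: (main_dir Hle HF).
Qed.
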